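(* Let $A:\mathbb{R}^n\rightrightarrows\mathbb{R}^n$ be maximally monotone, let $x^*$ satisfy $0\in A(x^* )$, and let $\tilde A=I-J_A$ with $J_A=(I+A)^{-1}$. Let $r\geqslant2$ and $0<C\leqslant1$. Let $(x_k),(z_k)$ be sequences in $\mathbb{R}^n$ with $x_0=z_0$ satisfying, for all $k\geqslant0$, $$z_k=\frac{k}{r}(x_{k+1}-x_k)+\Big(1+\frac{k}{r}\Big)\tilde A(x_{k+1})+x_{k+1},\qquad z_{k+1}=z_k-\frac{C}{r}\tilde A(x_{k+1}).$$ Then for every $k\geqslant1$, $$\|\tilde A(x_k)\|^2\leqslant\frac{(r^3-r^2)\|x_0-x^*\|^2}{Ck[k+3r-C(k+1)]},\qquad \langle\tilde A(x_k),x_k-x^*\rangle\leqslant\frac{(r^2-r)\|x_0-x^*\|^2}{2Ck}.$$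
   Context: $J_A$ is the resolvent of $A$ and $\tilde A=I-J_A$ its Yosida approximation. $\|\cdot\|$ is the Euclidean norm. *)

(* Defs.v *)
From HB Require Import structures.
From mathcomp Require Import all_boot all_order all_algebra.
From mathcomp Require Import reals.
Set Implicit Arguments. Unset Strict Implicit. Unset Printing Implicit Defensive.
Import Order.TTheory GRing.Theory Num.Theory.
Local Open Scope ring_scope.

Section Defs.
Variables (R : realType) (n : nat).

Definition dotp (u v : 'rV[R]_n) : R := (u *m v^T) 0 0.

Definition sqnorm (u : 'rV[R]_n) : R := dotp u u.

(* A set-valued operator A : R^n ⇉ R^n; A x u means u ∈ A(x). *)
Definition setop := 'rV[R]_n -> 'rV[R]_n -> Prop.

Definition monotone_op (A : setop) : Prop :=
  forall x u y v, A x u -> A y v -> 0 <= dotp (x - y) (u - v).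

Definition maximally_monotone (A : setop) : Prop :=
  monotone_op A /\
  forall B : setop, monotone_op B -> (forall x u, A x u -> B x u) ->
    forall x u, B x u -> A x u.

(* J is the resolvent (I + A)^{-1}: its graph is exactly the inverse of
   the graph of I + A, i.e. J x = y  <->  x ∈ y + A(y). *)
Definition is_resolvent (A : setop) (J : 'rV[R]_n -> 'rV[R]_n) : Prop :=
  forall x y, J x = y <-> A y (x - y).

Definition yosida (J : 'rV[R]_n -> 'rV[R]_n) (x : 'rV[R]_n) : 'rV[R]_n :=
  x - J x.

End Defs.

(* Main.v *)
Require Import Defs.
From HB Require Import structures.
From mathcomp Require Import all_boot all_order all_algebra.
From mathcomp Require Import reals.
From mathcomp Require Import ring lra.
Import Order.TTheory GRing.Theory Num.Theory.
Local Open Scope ring_scope.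

Section Aux.
Context {R : realType} {n : nat}.

Lemma dotpE (u v : 'rV[R]_n) : dotp u v = \sum_i u 0 i * v 0 i.
Proof. by rewrite /dotp !mxE; apply: eq_bigr => i _; rewrite mxE. Qed.

Lemma sqnormE (u : 'rV[R]_n) : sqnorm u = \sum_i u 0 i ^+ 2.
Proof. by rewrite /sqnorm dotpE; apply: eq_bigr => i _; rewrite expr2. Qed.

Lemma sqnorm_ge0 (u : 'rV[R]_n) : 0 <= sqnorm u.
Proof. by rewrite sqnormE; apply: sumr_ge0 => i _; apply: sqr_ge0. Qed.

Lemma coco (A : setop R n) J (x y : 'rV[R]_n) :
  monotone_op A -> is_resolvent A J ->
  sqnorm (yosida J x - yosida J y) <= dotp (yosida J x - yosida J y) (x - y).
Proof.
move=> mA rJ.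
have hx : A (J x) (x - J x) by apply/rJ.
have hy : A (J y) (y - J y) by apply/rJ.
have := mA _ _ _ _ hx hy.
have -> : dotp (yosida J x - yosida J y) (x - y) =
   sqnorm (yosida J x - yosida J y) +
   dotp (J x - J y) (x - J x - (y - J y)).
  rewrite /sqnorm !dotpE -big_split /=; apply: eq_bigr => i _.
  rewrite /yosida !mxE; ring.
lra.
Qed.

End Aux.

Theorem theorem11 (R : realType) (n : nat) (A : setop R n)
  (J : 'rV[R]_n -> 'rV[R]_n) (xstar : 'rV[R]_n) (r C : R)
  (x z : nat -> 'rV[R]_n) :
  maximally_monotone A ->
  is_resolvent A J ->
  A xstar 0 ->
  2 <= r -> 0 < C -> C <= 1 ->
  x 0%N = z 0%N ->
  (forall k : nat,
     z k = (k%:R / r) *: (x k.+1 - x k) + (1 + k%:R / r) *: yosida J (x k.+1)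
           + x k.+1) ->
  (forall k : nat, z k.+1 = z k - (C / r) *: yosida J (x k.+1)) ->
  forall k : nat, (1 <= k)%N ->
    sqnorm (yosida J (x k))
      <= (r ^+ 3 - r ^+ 2) * sqnorm (x 0%N - xstar)
         / (C * k%:R * (k%:R + 3 * r - C * (k%:R + 1)))
    /\
    dotp (yosida J (x k)) (x k - xstar)
      <= (r ^+ 2 - r) * sqnorm (x 0%N - xstar) / (2 * C * k%:R).
Proof.
move=> [mA _] rJ Ax r2 C0 C1 x0 hz hz1.
set g := fun k => yosida J (x k).
have gs : yosida J xstar = 0.
  have : J xstar = xstar by apply/rJ; rewrite subrr.
  by rewrite /yosida => ->; rewrite subrr.
have r0 : r != 0 by apply: lt0r_neq0; lra.
set E := fun k : nat =>
  r * (r - 1) * sqnorm (z k - xstar)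
  + 2 * C * k%:R * (dotp (g k) (x k - xstar) - dotp (g k) (z k - xstar))
  + C * k%:R * (k%:R + r) / r * sqnorm (g k).
have step : forall k, E k.+1 <= E k.
  move=> k.
  have I1 := @coco R n A J (x k.+1) (x k) mA rJ.
  have I2 := @coco R n A J (x k.+1) xstar mA rJ.
  rewrite gs subr0 in I2.
  have S1 := sqnorm_ge0 (g k - g k.+1).
  have S2 := sqnorm_ge0 (g k.+1).
  have hk : (k.+1)%:R = k%:R + 1 :> R by rewrite -addn1 natrD.
  set l1 := 2 * C * k%:R * (k%:R + r) / r.
  set l2 := 2 * C * (r - 1).
  set m1 := 3 * C * k%:R * (k%:R + r) / r.
  set m2 := C * ((4 * r + 1) * (r - 1) - (r + 1) * C + 2 * (r - 1 - C) * k%:R) / r.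
  have k0 : 0 <= k%:R :> R := ler0n _ _.
  have l1p : 0 <= l1.
    rewrite /l1; apply: divr_ge0; last lra.
    by apply: mulr_ge0; [apply: mulr_ge0 => //; lra | lra].
  have l2p : 0 <= l2 by rewrite /l2; apply: mulr_ge0; lra.
  have m1p : 0 <= m1.
    rewrite /m1; apply: divr_ge0; last lra.
    by apply: mulr_ge0; [apply: mulr_ge0 => //; lra | lra].
  have m2p : 0 <= m2.
    rewrite /m2; apply: divr_ge0; last lra.
    apply: mulr_ge0; first lra.
    have h2 : 0 <= r - 1 - C by lra.
    have h3 := mulr_ge0 h2 k0.
    nra.
  have -> : E k = E k.+1
    + l1 * (dotp (g k.+1 - g k) (x k.+1 - x k) - sqnorm (g k.+1 - g k))
    + l2 * (dotp (g k.+1) (x k.+1 - xstar) - sqnorm (g k.+1))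
    + m1 * sqnorm (g k - g k.+1) + m2 * sqnorm (g k.+1).
    rewrite /E hz1 hz /l1 /l2 /m1 /m2 /sqnorm !dotpE -!sumrB !mulr_sumr -!big_split /=.
    apply: eq_bigr => i _; by rewrite /g !mxE hk; field.
  have j1 : 0 <= l1 * (dotp (g k.+1 - g k) (x k.+1 - x k) - sqnorm (g k.+1 - g k)).
    by apply: mulr_ge0 => //; rewrite subr_ge0; exact: I1.
  have j2 : 0 <= l2 * (dotp (g k.+1) (x k.+1 - xstar) - sqnorm (g k.+1)).
    by apply: mulr_ge0 => //; rewrite subr_ge0; exact: I2.
  have j3 := mulr_ge0 m1p S1.
  have j4 := mulr_ge0 m2p S2.
  lra.
have E0 : E 0%N = r * (r - 1) * sqnorm (x 0%N - xstar).
  by rewrite /E -x0 /= !(mulr0n, mulr0, mul0r, addr0).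
have Ek : forall k, E k <= r * (r - 1) * sqnorm (x 0%N - xstar).
  elim=> [|m IH]; first by rewrite E0.
  exact: le_trans (step m) IH.
move=> k k1.
have kp : 0 < k%:R :> R by rewrite ltr0n.
have r10 : r - 1 != 0 by apply: lt0r_neq0; lra.
have rr0 : r * (r - 1) != 0 by rewrite mulf_neq0.
change (sqnorm (g k) <= (r ^+ 3 - r ^+ 2) * sqnorm (x 0%N - xstar)
         / (C * k%:R * (k%:R + 3 * r - C * (k%:R + 1)))
    /\ dotp (g k) (x k - xstar) <= (r ^+ 2 - r) * sqnorm (x 0%N - xstar) / (2 * C * k%:R)).
have co : sqnorm (g k) <= dotp (g k) (x k - xstar).
  have := @coco R n A J (x k) xstar mA rJ.
  by rewrite gs subr0.
have Y : 0 <= r * (r - 1) * sqnorm (z k - xstar) - 2 * C * k%:R * dotp (g k) (z k - xstar)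
              + (C * k%:R) ^+ 2 / (r * (r - 1)) * sqnorm (g k).
  have -> : r * (r - 1) * sqnorm (z k - xstar) - 2 * C * k%:R * dotp (g k) (z k - xstar)
              + (C * k%:R) ^+ 2 / (r * (r - 1)) * sqnorm (g k)
        = \sum_i r * (r - 1) * ((z k - xstar) 0 i - C * k%:R / (r * (r - 1)) * g k 0 i) ^+ 2.
    rewrite /sqnorm !dotpE !mulr_sumr -!sumrB -!big_split /=.
    apply: eq_bigr => i _. by rewrite !mxE; field; rewrite r10 r0.
  apply: sumr_ge0 => i _; apply: mulr_ge0; [nra | apply: sqr_ge0].
have Ekk := Ek k; rewrite /E in Ekk.
have beta : 0 <= C * k%:R * (k%:R + r) / r - (C * k%:R) ^+ 2 / (r * (r - 1)).
  have -> : C * k%:R * (k%:R + r) / r - (C * k%:R) ^+ 2 / (r * (r - 1))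
      = C * k%:R * ((k%:R + r) * (r - 1) - C * k%:R) / (r * (r - 1)) by field; rewrite ?r10 ?r0.
  apply: divr_ge0; last nra.
  apply: mulr_ge0; first nra.
  nra.
have bQ := mulr_ge0 beta (sqnorm_ge0 (g k)).
have key : 2 * C * k%:R * dotp (g k) (x k - xstar)
   + (C * k%:R * (k%:R + r) / r - (C * k%:R) ^+ 2 / (r * (r - 1))) * sqnorm (g k)
   <= r * (r - 1) * sqnorm (x 0%N - xstar) by lra.
have N0 := sqnorm_ge0 (x 0%N - xstar).
split.
  have D0 : 0 < C * k%:R * (k%:R + 3 * r - C * (k%:R + 1)).
    apply: mulr_gt0; first exact: mulr_gt0.
    nra.
  rewrite ler_pdivlMr //.
  have PQ : 0 <= 2 * C * k%:R * (dotp (g k) (x k - xstar) - sqnorm (g k)).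
    apply: mulr_ge0; first nra. by rewrite subr_ge0.
  have key2 : 2 * C * k%:R * sqnorm (g k)
   + (C * k%:R * (k%:R + r) / r - (C * k%:R) ^+ 2 / (r * (r - 1))) * sqnorm (g k)
   <= r * (r - 1) * sqnorm (x 0%N - xstar) by lra.
  have key3 := ler_wpM2l (_ : 0 <= r) key2.
  have diff : 0 <= (r * (2 * C * k%:R + (C * k%:R * (k%:R + r) / r - (C * k%:R) ^+ 2 / (r * (r - 1))))
                   - C * k%:R * (k%:R + 3 * r - C * (k%:R + 1))) * sqnorm (g k).
    apply: mulr_ge0; last exact: sqnorm_ge0.
    have -> : r * (2 * C * k%:R + (C * k%:R * (k%:R + r) / r - (C * k%:R) ^+ 2 / (r * (r - 1))))
                   - C * k%:R * (k%:R + 3 * r - C * (k%:R + 1))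
          = C * C * k%:R * ((k%:R + 1) * (r - 1) - k%:R) / (r - 1) by field; rewrite ?r10 ?r0.
    apply: divr_ge0; last lra.
    apply: mulr_ge0; first nra.
    nra.
  have r0' : 0 <= r by lra.
  have := key3 r0'.
  nra.
rewrite ler_pdivlMr; last nra.
lra.
Qed.
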